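(* Let $K$ be a simplicial complex and $W\subset K$ a subcomplex. Let $$Z:=\{\tau\in K:\ \tau\cup\sigma\notin K\text{ for all }\sigma\in K\setminus W\}.$$ Then $O_K(Z)=Z$ and $Z=W\setminus\overline{K\setminus W}$.
   Context: A simplicial complex $K$ on a vertex set $S$ is a collection of subsets of $S$ (faces) closed under taking subsets (including $\varnothing$). For a subset $Z\subset K$, the closure $\overline Z$ is the smallest subcomplex of $K$ containing $Z$ (all subsets of elements of $Z$), and the open neighborhood is $O_K(Z)=\{\sigma\in K:\ \sigma\supseteq\tau\text{ for some }\tau\in Z\}$. *)

(* Defs.v *)
From mathcomp Require Import all_boot.
From mathcomp Require Export finmap.
Set Implicit Arguments. Unset Strict Implicit. Unset Printing Implicit Defensive.
Local Open Scope fset_scope.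

Section Simplicial.
Variable T : choiceType.

Definition family := {fset T} -> Prop.

Definition simplicial_complex (K : family) : Prop :=
  K fset0 /\ forall s t : {fset T}, K s -> t `<=` s -> K t.

Definition subcomplex (W K : family) : Prop :=
  simplicial_complex W /\ forall s, W s -> K s.

Definition fam_closure (Z : family) : family :=
  fun t => exists2 s, Z s & t `<=` s.

Definition open_nbhd (K Z : family) : family :=
  fun s => K s /\ exists2 t, Z t & t `<=` s.

Definition fam_diff (K W : family) : family := fun s => K s /\ ~ W s.

End Simplicial.

(* Main.v *)
Require Import Defs.
From mathcomp Require Import all_boot.
From mathcomp Require Import finmap.
From Stdlib Require Import Classical.
Local Open Scope fset_scope.

Theorem lemma3p4 (T : choiceType) (K W : {fset T} -> Prop) :
  simplicial_complex K -> subcomplex W K ->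
  let Z : {fset T} -> Prop :=
    fun tau => K tau /\ forall sigma, fam_diff K W sigma -> ~ K (tau `|` sigma) in
  (forall s, open_nbhd K Z s <-> Z s) /\
  (forall s, Z s <-> (W s /\ ~ fam_closure (fam_diff K W) s)).
Proof.
move=> [K0 Kc] [[W0 Wc] WK] Z; split=> s; split.
- move=> [Ks [t [Kt Ht] ts]]; split=> // sg Hsg Ksg.
  apply: (Ht sg Hsg); apply: (Kc _ _ Ksg).
  by apply: fsetSU.
- move=> [Ks Hs]; split=> //; exists s => //; exact: fsubset_refl.
- move=> [Ks Hs]; split.
  + apply: Classical_Prop.NNPP => nW.
    by apply: (Hs s (conj Ks nW)); rewrite fsetUid.
  + move=> [sg Hsg ssg]; apply: (Hs sg Hsg).
    by have /fsetUidPr -> := ssg; case: Hsg.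
- move=> [Ws Hc]; split; first exact: WK.
  move=> sg [Ksg nWsg] Ku; apply: Hc; exists (s `|` sg).
    split=> // Wu; apply: nWsg; apply: (Wc _ _ Wu); exact: fsubsetUr.
  exact: fsubsetUl.
Qed.
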